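(* Let $u$ and $v$ be vertices of $T$ such that $u$ is a descendant of $v$ and $T^v$ is contained in $T^u$. Let $T'$ be the canonical subtree among the connected components of the forest obtained from $T^u$ by deleting $C_{T^u}$ which contains $v$, and let $X$ be the set of vertices in $C_{T^u}$ that are descendants of $v$ and ancestors of $u$. Let $x$ be the element of $X$ that is highest in $T$. Then either $rt(T')$ or $l(T')$ is the parent of $x$.
   Context: Let $T$ be a rooted tree on $n$ vertices with positive edge weights. Ancestor/descendant refer to $T$, and a vertex counts as its own ancestor and descendant. $T_v$ denotes the subtree of $T$ rooted at $v$. For every non-leaf vertex $v$ of $T$ fix a child $c_1(v)$ with $|T_{c_1(v)}|$ maximal among the children of $v$; the edges $(v,c_1(v))$ are called leftmost. A subtree $R$ of $T$ (connected subgraph) is rooted at its vertex closest to the root of $T$, denoted $rt(R)$, and inherits the leftmost labelling; $R_v$ is the subtree of $R$ rooted at $v$. For $v\in V(R)$, $P_R(v)$ is the longest downward path from $v$ in $R$ using only leftmost edges; its last vertex is $l(v)$, and $l(R):=l(rt(R))$. For an integer $d$, a vertex $v$ of $R$ is $d$-balanced (in $R$) if $|R_{c_1(v)}|\le |R|-d$ (where $|R_{c_1(v)}|=0$ if $c_1(v)$ is undefined or not in $R$). $b_d(v)$ is the first $d$-balanced vertex on $P_R(v)$, or NULL if none. Define $CV(R,d)=\emptyset$ if $b_d(rt(R))$ is NULL, and otherwise, with $b=b_d(rt(R))$, $CV(R,d)=\{b\}\cup\bigcup_{w}CV(R_w,d)$, the union over the children $w$ of $b$ in $R$. Fix an integer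 $k\ge 4$. For a subtree $R$ with $m$ vertices, $C_R:=V(R)$ if $k\ge m/2-1$, and otherwise $C_R:=CV(R,m/k)\cup\{l(R),rt(R)\}$. Canonical subtrees: $T$ is canonical; if $R$ is canonical, every connected component of the forest obtained from $R$ by deleting the vertices of $C_R$ (and incident edges) is canonical. Every vertex $v$ of $T$ belongs to $C_R$ for exactly one canonical subtree $R$, denoted $T^v$. *)

(* Defs.v *)
(* Rooted trees on a finite vertex type V, given by a parent
   function p with a root r (p r = r, every vertex reaches r by iterating p).
   Edges of T are {v, p v} for v <> r.  Edge weights play no role in the
   notions below and are omitted. *)
From HB Require Import structures.
From mathcomp Require Import all_boot all_order all_algebra.
Set Implicit Arguments. Unset Strict Implicit. Unset Printing Implicit Defensive.
Import Order.TTheory GRing.Theory Num.Theory.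

Section Canon.
Variables (V : finType) (p : V -> V) (r : V) (c1 : V -> option V) (k : nat).

Definition is_rooted_tree : Prop :=
  p r = r /\ forall v, exists n, iter n p v = r.

(* x is an ancestor of y (every vertex is its own ancestor) *)
Definition anc (x y : V) : bool := [exists i : 'I_#|V|.+1, iter i p y == x].

Definition desc (v : V) : {set V} := [set w | anc v w].

Definition child (v w : V) : bool := (p w == v) && (w != v).

Definition is_leftmost : Prop :=
  forall v, match c1 v with
            | None => forall w, ~~ child v w
            | Some c => child v c /\ forall w, child v w -> #|desc w| <= #|desc c|
            end.

Definition adj (x y : V) : bool := (x != y) && ((p x == y) || (p y == x)).

Definition connectedb (R : {set V}) : bool :=
  (R != set0) &&
  [forall x in R, forall y in R,
     connect (fun a b => [&& a \in R, b \in R & adj a b]) x y].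

Definition rt (R : {set V}) : V :=
  odflt r [pick x in R | [forall y in R, anc x y]].

Definition stepR (R : {set V}) (x : V) : V :=
  match c1 x with Some c => if c \in R then c else x | None => x end.

(* the vertices of P_R(v), in order (the last one possibly repeated) *)
Definition pathR (R : {set V}) (v : V) : seq V :=
  [seq iter i (stepR R) v | i <- iota 0 #|V|].

Definition lv (R : {set V}) (v : V) : V := iter #|V| (stepR R) v.
Definition lR (R : {set V}) : V := lv R (rt R).

(* |R_{c1(v)}|, which is 0 if c1(v) is undefined or not in R *)
Definition c1size (R : {set V}) (x : V) : nat :=
  match c1 x with Some c => if c \in R then #|R :&: desc c| else 0 | None => 0 end.

Definition balanced (R : {set V}) (d : rat) (x : V) : bool :=
  (x \in R) && ((c1size R x)%:R <= (#|R|%:R : rat) - d)%R.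

Definition bd (R : {set V}) (d : rat) (v : V) : option V :=
  ohead [seq x <- pathR R v | balanced R d x].

(* CV(R,d), by recursion with fuel (the recursion is on strictly smaller
   subtrees R_w, so #|V|.+1 fuel suffices) *)
Fixpoint CVf (fuel : nat) (R : {set V}) (d : rat) : {set V} :=
  match fuel with
  | 0 => set0
  | n.+1 =>
    match bd R d (rt R) with
    | None => set0
    | Some b => b |: \bigcup_(w | (w \in R) && child b w) CVf n (R :&: desc w) d
    end
  end.
Definition CV (R : {set V}) (d : rat) : {set V} := CVf #|V|.+1 R d.

Definition C (R : {set V}) : {set V} :=
  let m := #|R| in
  if (m%:R / 2 - 1 <= (k%:R : rat))%R then R
  else CV R (m%:R / k%:R)%R :|: [set lR R; rt R].

Definition component (A S : {set V}) : Prop :=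
  [/\ connectedb S, S \subset A &
      forall x y, x \in S -> y \in A -> adj x y -> y \in S].

Inductive canonical : {set V} -> Prop :=
| canonical_T : canonical setT
| canonical_comp R S : canonical R -> component (R :\: C R) S -> canonical S.

End Canon.

(* Main.v *)
Require Import Defs.
From mathcomp Require Import all_boot all_order all_algebra.
Set Implicit Arguments. Unset Strict Implicit. Unset Printing Implicit Defensive.


Lemma ancP (V : finType) (p : V -> V) a b :
  reflect (exists n, iter n p b = a) (anc p a b).
Proof.
apply: (iffP existsP) => [[i /eqP <-]|[n Hn]]; first by exists i.
have Hc : fconnect p b a by rewrite -Hn fconnect_iter.
have Hlt : findex p b a < #|V|.+1.
  apply: leq_trans (findex_max Hc) _; apply: leqW; exact: max_card.
by exists (Ordinal Hlt); rewrite /= iter_findex.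
Qed.

Lemma anc_refl (V : finType) (p : V -> V) a : anc p a a.
Proof. by apply/ancP; exists 0. Qed.

Lemma anc_trans (V : finType) (p : V -> V) a b c :
  anc p a b -> anc p b c -> anc p a c.
Proof.
move=> /ancP[m Hm] /ancP[n Hn]; apply/ancP; exists (m + n).
by rewrite iterD Hn.
Qed.

Lemma anc_p (V : finType) (p : V -> V) x : anc p (p x) x.
Proof. by apply/ancP; exists 1. Qed.

Lemma anc_split (V : finType) (p : V -> V) a b :
  anc p a b -> a = b \/ anc p a (p b).
Proof.
move=> /ancP[[|n] Hn]; first by left.
by right; apply/ancP; exists n; rewrite -iterSr.
Qed.

Lemma iter_fix (V : Type) (p : V -> V) r n : p r = r -> iter n p r = r.
Proof. by move=> H; elim: n => //= n ->. Qed.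

Lemma anc_antisym (V : finType) (p : V -> V) r :
  is_rooted_tree p r -> forall a b, anc p a b -> anc p b a -> a = b.
Proof.
move=> [Hr Hall] a b /ancP[i Hi] /ancP[j Hj].
have Hc : iter (i + j) p b = b by rewrite addnC iterD Hi.
case: (Hall b) => N HN.
have Hm : forall m, iter (m * (i + j)) p b = b.
  by elim=> [|m IH] //=; rewrite mulSn iterD IH.
case E: (i + j) => [|s].
  by move: E => /eqP; rewrite addn_eq0 => /andP[/eqP Ei _]; rewrite -Hi Ei.
have Hb : b = r.
  have := Hm N; rewrite E => Hb.
  have HN' : N <= N * s.+1 by rewrite leq_pmulr.
  by rewrite -Hb -(subnK HN') iterD HN iter_fix.
by rewrite -Hi Hb iter_fix.
Qed.

Lemma anc_comp (V : finType) (p : V -> V) a b y :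
  anc p a y -> anc p b y -> anc p a b \/ anc p b a.
Proof.
move=> /ancP[i Hi] /ancP[j Hj].
case: (leqP i j) => H.
  right; apply/ancP; exists (j - i); by rewrite -Hi -iterD subnK.
left; apply/ancP; exists (i - j); rewrite -Hj -iterD subnK //; exact: ltnW.
Qed.

Lemma anc_child (V : finType) (p : V -> V) s y :
  anc p s y -> s != y -> exists t, [/\ p t = s, t != s & anc p t y].
Proof.
move=> /ancP[n]; elim: n y => [|n IH] y Hn Hne; first by move: Hne; rewrite -Hn /= eqxx.
rewrite iterSr in Hn.
case: (eqVneq (p y) s) => Hps.
  by exists y; split => //; [rewrite eq_sym | exact: anc_refl].
have [t [H1 H2 H3]] := IH (p y) Hn ltac:(by rewrite eq_sym).
exists t; split => //; exact: anc_trans H3 (anc_p _ _).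
Qed.

Lemma rt_top (V : finType) (p : V -> V) r (R : {set V}) a :
  is_rooted_tree p r -> a \in R -> (forall y, y \in R -> anc p a y) -> rt p r R = a.
Proof.
move=> Ht Ha Hall; rewrite /rt; case: pickP => [x /andP[Hx /forall_inP Hx2]|H] /=.
  by apply: (anc_antisym Ht); [apply: Hx2 | apply: Hall].
have := H a; rewrite Ha /=; move/negbT => /negP; case.
by apply/forall_inP.
Qed.

Lemma conn_path (V : finType) (p : V -> V) (R : {set V}) a c :
  connectedb p R -> a \in R -> c \in R ->
  exists2 s, path (fun a b => [&& a \in R, b \in R & adj p a b]) c s & a = last c s.
Proof.
move=> /andP[_ /forall_inP H] Ha Hc.
have /forall_inP /(_ a Ha) := H c Hc.
by move/connectP.
Qed.

Lemma crossing (V : finType) (p : V -> V) (R : {set V}) a c z :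
  connectedb p R -> a \in R -> c \in R -> anc p z c -> ~~ anc p z a -> z \in R.
Proof.
move=> HR Ha Hc; have [s Hs ->] := conn_path HR Ha Hc.
elim: s c Hc Hs => [|x s IH] c Hc /=; first by move=> _ H1 H2; rewrite H1 in H2.
move=> /andP[/and3P[_ Hx /andP[Hne Hadj]] Hp] Hzc.
case Hzx: (anc p z x); first by apply: IH Hx Hp Hzx.
case/orP: Hadj => /eqP Hq.
  case: (anc_split Hzc) => [->|]; first by [].
  by rewrite Hq Hzx.
by rewrite (anc_trans Hzc (etrans (congr1 (fun w => anc p w x) (esym Hq)) (anc_p p x))) in Hzx.
Qed.

Lemma conn_top (V : finType) (p : V -> V) r (R : {set V}) :
  is_rooted_tree p r -> connectedb p R -> exists a, a \in R /\ forall y, y \in R -> anc p a y.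
Proof.
move=> Ht HR; have := HR; move=> /andP[/set0Pn[a0 Ha0] _].
case: (arg_maxnP (fun a => #|desc p a|) Ha0) => a Ha Hmax.
exists a; split => // y Hy.
have [s Hs ->] := conn_path HR Hy Ha.
have : forall c, c \in R -> anc p a c ->
   path (fun a b => [&& a \in R, b \in R & adj p a b]) c s -> anc p a (last c s).
  elim: s {Hs} => [|x s IH] c Hc Hac //= /andP[/and3P[_ Hx /andP[Hne Hadj]] Hp].
  apply: (IH _ Hx _ Hp).
  case/orP: Hadj => /eqP Hq; last by apply: anc_trans Hac _; rewrite -Hq anc_p.
  case: (anc_split Hac) => [Eac|]; last by rewrite Hq.
  subst c x; exfalso.
  have := Hmax _ Hx; rewrite /= leqNgt => /negP; apply.
  apply: proper_card; rewrite properE; apply/andP; split.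
    by apply/subsetP => w; rewrite !inE => Hw; apply: anc_trans (anc_p p a) Hw.
  apply/subsetPn; exists (p a); first by rewrite inE anc_refl.
  rewrite inE; apply/negP => H; move/negP: Hne; apply; apply/eqP.
  by apply: (anc_antisym Ht) H (anc_p p a).
by move=> H; apply: H Ha (anc_refl _ _) Hs.
Qed.

Lemma canon_conn (V : finType) (p : V -> V) r c1 k (R : {set V}) :
  canonical p r c1 k R -> R = setT \/ connectedb p R.
Proof. by case=> [|R' S _ [H _ _]]; [left|right]. Qed.

Lemma spine (V : finType) (p : V -> V) r c1 (R : {set V}) a :
  is_rooted_tree p r -> is_leftmost p c1 ->
  forall n t, anc p a t -> t != a -> anc p t (iter n (stepR c1 R) a) -> c1 (p t) = Some t.
Proof.
move=> Ht Hl; elim=> [|n IH] t Hat Hne /=.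
  by move=> Hta; move/negP: Hne; case; apply/eqP; apply: (anc_antisym Ht).
set s := iter n _ a; rewrite /stepR.
have HL := Hl s; case E: (c1 s) HL => [c|] HL; last exact: IH.
case: ifP => Hc Htc; last exact: IH.
case: HL => /andP[/eqP Hpc Hcs] _.
case: (anc_split Htc) => [->|]; first by rewrite Hpc E.
by rewrite Hpc; apply: IH.
Qed.

Lemma bd_path (V : finType) (p : V -> V) c1 (R : {set V}) (d : rat) a b :
  bd p c1 R d a = Some b -> b \in R /\ exists i, b = iter i (stepR c1 R) a.
Proof.
rewrite /bd => Ef.
have : b \in [seq x <- pathR c1 R a | balanced p c1 R d x].
  by move: Ef; case: (filter _ _) => [|b' s] //= [->]; rewrite inE eqxx.
rewrite mem_filter => /andP[/andP[HbR _] /mapP[i _ Ebi]].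
by split => //; exists (i : nat).
Qed.

Lemma cvf_sub (V : finType) (p : V -> V) r c1 (d : rat) n (R : {set V}) :
  CVf p r c1 n R d \subset R.
Proof.
elim: n R => [|n IH] R /=; first exact: sub0set.
case E: (bd p c1 R d (rt p r R)) => [b|]; last exact: sub0set.
have [HbR _] := bd_path E.
apply/subsetP => y; rewrite in_setU1 => /orP[/eqP ->//|/bigcupP[w _ Hy]].
by have := subsetP (IH _) y Hy; rewrite inE => /andP[].
Qed.

Lemma cvf_key (V : finType) (p : V -> V) r c1 (d : rat) :
  is_rooted_tree p r -> is_leftmost p c1 ->
  forall n (R : {set V}) a, a \in R -> (forall y, y \in R -> anc p a y) ->
  forall t y, t \in R -> p t \in R -> p t != t -> p t \notin CVf p r c1 n R d ->
  y \in CVf p r c1 n R d -> anc p t y -> c1 (p t) = Some t.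
Proof.
move=> Ht Hl; elim=> [|n IH] R a Ha Htop t y HtR HptR Hne Hnot Hy Hty.
  by rewrite inE in Hy.
have Hta : t != a.
  apply/negP => /eqP Eta; move/negP: Hne; apply; apply/eqP.
  apply: (anc_antisym Ht (anc_p p t)); rewrite {1}Eta; exact: Htop.
move: Hy Hnot => /=; rewrite (rt_top Ht Ha Htop).
case E: (bd p c1 R d a) => [b|]; last by rewrite inE.
have [HbR [i Hbi]] := bd_path E.
rewrite !in_setU1 negb_or => Hy /andP[Hpb Hnot].
case/orP: Hy => [/eqP Hy|/bigcupP[w /andP[Hw /andP[/eqP Hpw Hwb]] Hyw]].
  by apply: (spine (R := R) Ht Hl (n := i) (Htop _ HtR) Hta); rewrite -Hbi -Hy.
have Hwy : anc p w y.
  by have := subsetP (cvf_sub p r c1 d n (R :&: desc p w)) y Hyw; rewrite !inE => /andP[].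
case: (eqVneq t w) => [Etw|Htw].
  by move: Hpb; rewrite Etw Hpw eqxx.
case: (anc_comp Hty Hwy) => Htw'.
  case: (anc_split Htw') => [Etw|Htb]; first by rewrite Etw eqxx in Htw.
  by apply: (spine (R := R) Ht Hl (n := i) (Htop _ HtR) Hta); rewrite -Hbi -Hpw.
have HptW : anc p w (p t).
  by case: (anc_split Htw') => // Ewt; rewrite Ewt eqxx in Htw.
apply: (IH (R :&: desc p w) w) Hyw Hty.
- by rewrite !inE Hw anc_refl.
- by move=> z; rewrite !inE => /andP[].
- by rewrite !inE HtR Htw'.
- by rewrite !inE HptR HptW.
- exact: Hne.
- by apply/negP => H; move/negP: Hnot; apply; apply/bigcupP; exists w => //; rewrite Hw /child Hpw eqxx.
Qed.

Lemma C_key (V : finType) (p : V -> V) r c1 k (R : {set V}) a :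
  is_rooted_tree p r -> is_leftmost p c1 ->
  a \in R -> (forall y, y \in R -> anc p a y) ->
  forall t y, t \in R -> p t \in R -> p t != t -> p t \notin C p r c1 k R ->
  y \in C p r c1 k R -> anc p t y -> c1 (p t) = Some t.
Proof.
move=> Ht Hl Ha Htop t y HtR HptR Hne.
have Hta : t != a.
  apply/negP => /eqP Eta; move/negP: Hne; apply; apply/eqP.
  apply: (anc_antisym Ht (anc_p p t)); rewrite {1}Eta; exact: Htop.
rewrite /C; case: ifP => _; first by rewrite HptR.
rewrite !inE !negb_or => /and3P[Hn1 Hn2 Hn3] /orP[Hy|/orP[/eqP Hy|/eqP Hy]] Hty.
- exact: (cvf_key Ht Hl Ha Htop HtR HptR Hne Hn1 Hy Hty).
- apply: (spine (R := R) Ht Hl (n := #|V|) (Htop _ HtR) Hta).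
  by move: Hty; rewrite Hy /lR /lv (rt_top Ht Ha Htop).
- exfalso; move/negP: Hn3; apply; apply/eqP; rewrite (rt_top Ht Ha Htop).
  apply: (anc_antisym Ht); last exact: Htop.
  apply: anc_trans (anc_p p t) _; by rewrite Hy (rt_top Ht Ha Htop) in Hty.
Qed.

Lemma C_sub (V : finType) (p : V -> V) r c1 k (R : {set V}) a :
  is_rooted_tree p r -> a \in R -> (forall y, y \in R -> anc p a y) ->
  C p r c1 k R \subset R.
Proof.
move=> Ht Ha Htop; rewrite /C; case: ifP => _ //.
apply/subsetP => y; rewrite !inE => /orP[Hy|/orP[/eqP ->|/eqP ->]].
- exact: (subsetP (cvf_sub _ _ _ _ _ _) y Hy).
- rewrite /lR /lv (rt_top Ht Ha Htop); elim: #|V| => //= n IH.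
  rewrite /stepR; case: (c1 _) => [c|//]; by case: ifP.
- by rewrite (rt_top Ht Ha Htop).
Qed.

Lemma canon_props (V : finType) (p : V -> V) r c1 k (R : {set V}) :
  is_rooted_tree p r -> canonical p r c1 k R ->
  (exists a, a \in R /\ forall y, y \in R -> anc p a y) /\
  (forall a c z, a \in R -> c \in R -> anc p z c -> ~~ anc p z a -> z \in R).
Proof.
move=> Ht HR; case: (canon_conn HR) => [->|Hc].
  split; last by move=> *; rewrite inE.
  exists r; split => // y _; case: Ht => _ /(_ y) [n Hn]; apply/ancP; by exists n.
split; first exact: conn_top Ht Hc.
move=> a c z; exact: crossing Hc.
Qed.
Unset Implicit Arguments.

Theorem lemma6 (V : finType) (p : V -> V) (r : V) (c1 : V -> option V) (k : nat) :
  is_rooted_tree p r -> is_leftmost p c1 -> 4 <= k ->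
  forall u v : V, anc p v u ->
  forall Tu Tv : {set V},
    canonical p r c1 k Tu -> u \in C p r c1 k Tu ->
    canonical p r c1 k Tv -> v \in C p r c1 k Tv ->
    Tv \subset Tu ->
  forall T' : {set V},
    component p (Tu :\: C p r c1 k Tu) T' -> v \in T' ->
  forall x : V,
    x \in [set y in C p r c1 k Tu | anc p v y && anc p y u] ->
    (forall y, y \in [set y in C p r c1 k Tu | anc p v y && anc p y u] -> anc p x y) ->
    x != r /\ (p x = rt p r T' \/ p x = lR p r c1 T').
Proof.
move=> Ht Hl _ u v Hvu Tu Tv HTu HuC _ _ _ T' [HT'c HT'sub HT'cl] HvT' x HxX Hmin.
set CC := C p r c1 k Tu in HuC HT'sub HT'cl HxX Hmin *.
have [[aU [HaU HtopU]] HcrossU] := canon_props Ht HTu.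
have HCsub : CC \subset Tu := C_sub c1 k Ht HaU HtopU.
have HT'in : forall z, z \in T' -> z \in Tu /\ z \notin CC.
  by move=> z /(subsetP HT'sub); rewrite inE => /andP[].
move: (HxX); rewrite inE => /and3P[HxC Hvx Hxu].
have [HvU HvC] := HT'in v HvT'.
have Hxv : x != v by apply/negP => /eqP E; rewrite -E HxC in HvC.
have Hfix : forall z, p z = z -> z = r.
  by move=> z Hz; case: Ht => _ /(_ z) [n Hn]; rewrite -Hn iter_fix.
have Hxr : x != r.
  apply/negP => /eqP E; move/negP: Hxv; apply; apply/eqP.
  move/ancP: Hvx => [n Hn]; by rewrite -Hn E iter_fix //; case: Ht.
have Hpx : p x != x.
  by apply/negP => /eqP E; rewrite (Hfix _ E) eqxx in Hxr.
split => //; right.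
have Hvpx : anc p v (p x).
  by case: (anc_split Hvx) => // E; rewrite E eqxx in Hxv.
have Hbetween : forall n z, iter n p z = v -> anc p z (p x) -> z \in T'.
  elim=> [|n IH] z Hz Hzpx; first by move: Hz => /= ->.
  case: (eqVneq z v) => [->//|Hzv].
  have Hpz : p z \in T'.
    by apply: IH; [rewrite -iterSr | exact: anc_trans (anc_p p z) Hzpx].
  have Hvz : anc p v z by apply/ancP; exists n.+1.
  have Hzx : anc p z x := anc_trans Hzpx (anc_p p x).
  have HzU : z \in Tu.
    apply: (HcrossU v u z HvU (subsetP HCsub u HuC)) (anc_trans Hzx Hxu) _.
    by apply/negP => H; move/negP: Hzv; apply; apply/eqP; apply: (anc_antisym Ht).
  have HzC : z \notin CC.
    apply/negP => HzC.
    have Hxz : anc p x z by apply: Hmin; rewrite inE HzC Hvz (anc_trans Hzx Hxu).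
    have Exz : x = z by apply: (anc_antisym Ht).
    move/negP: Hpx; apply; apply/eqP; apply: (anc_antisym Ht (anc_p p x)).
    by rewrite {1}Exz.
  apply: (HT'cl (p z)) Hpz _ _; first by rewrite inE HzC HzU.
  rewrite /adj eqxx orbT andbT; apply/negP => /eqP E.
  move/negP: Hzv; apply; apply/eqP; rewrite -Hz.
  have Hit : forall m, iter m p z = z by elim=> //= m ->; exact E.
  by rewrite Hit.
have HpxT' : p x \in T'.
  by move/ancP: Hvpx => [n Hn]; exact: (Hbetween n _ Hn (anc_refl _ _)).
have [HpxU HpxC] := HT'in _ HpxT'.
have [a' [Ha' Htop']] := conn_top Ht HT'c.
rewrite /lR /lv (rt_top Ht Ha' Htop').
have HK : forall t, t \in Tu -> p t \in T' -> p t != t -> anc p t x -> c1 (p t) = Some t.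
  move=> t HtU HptT' Hne Htx; have [HptU HptC] := HT'in _ HptT'.
  exact: (@C_key _ _ _ _ k _ _ Ht Hl HaU HtopU _ _ HtU HptU Hne HptC HxC Htx).
have Hc1x : c1 (p x) = Some x.
  by apply: HK => //; [exact: (subsetP HCsub) | exact: anc_refl].
have HxT' : x \notin T'.
  by apply/negP => /HT'in [_]; rewrite HxC.
set A := fun s => #|[set y | anc p y s]|.
have Hinv : forall n, let s := iter n (stepR c1 T') a' in
    [/\ s \in T', anc p s (p x) & (s = p x \/ n < A s)].
  elim=> [|n IH] /=.
    split => //; first exact: Htop'.
    right; rewrite /A card_gt0; apply/set0Pn; exists a'; by rewrite inE anc_refl.
  move: IH; set s := iter n _ a'; move=> [Hs Hspx Hor].
  case: (eqVneq s (p x)) => [Es|Hne].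
    rewrite Es /stepR Hc1x (negbTE HxT'); split => //; [exact: anc_refl | by left].
  case: Hor => [Es|Hlt]; first by rewrite Es eqxx in Hne.
  have [t [Hpt Hts Htpx]] := anc_child Hspx Hne.
  have Hst : anc p s t by rewrite -Hpt anc_p.
  have HtT' : t \in T'.
    apply: (crossing HT'c Ha' HpxT' Htpx); apply/negP => Hta.
    have Eta : t = a'.
      by apply: (anc_antisym Ht) Hta (anc_trans (Htop' _ Hs) Hst).
    move/negP: Hts; apply; apply/eqP; apply: (anc_antisym Ht) Hst.
    by rewrite {1}Eta; apply: Htop'.
  have Hc1s : c1 s = Some t.
    rewrite -Hpt; apply: HK.
    - by have [] := HT'in _ HtT'.
    - by rewrite Hpt.
    - by rewrite Hpt eq_sym.
    - exact: anc_trans Htpx (anc_p p x).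
  rewrite /stepR Hc1s HtT'; split => //; right.
  apply: leq_ltn_trans Hlt _; rewrite /A; apply: proper_card; rewrite properE.
  apply/andP; split.
    by apply/subsetP => y; rewrite !inE => Hy; apply: anc_trans Hy Hst.
  apply/subsetPn; exists t; first by rewrite inE anc_refl.
  rewrite inE; apply/negP => H; move/negP: Hts; apply; apply/eqP.
  exact: (anc_antisym Ht).
have [_ _ [->//|Hbad]] := Hinv #|V|.
by move: Hbad; rewrite /A ltnNge max_card.
Qed.
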